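(* Let $P$ be a finite set of points in the Euclidean plane with $|P|$ even, and let $M$ be a $2$-local maximum perfect matching on $P$. Let $M^*$ be a maximum-length perfect matching on $P$. Then $w(M)\geqslant \sqrt{3/7}\, w(M^* )$.
   Context: A perfect matching on a finite point set $P$ in the plane is a partition of $P$ into pairs; each pair $\{a,b\}$ is regarded as the straight-line segment (edge) $ab$. For a set $E$ of segments, $w(E)$ denotes the sum of the Euclidean lengths of its segments. A perfect matching $M$ on $P$ is a maximum-length (globally maximum) matching if $w(M)\geqslant w(M')$ for every perfect matching $M'$ on $P$. For an integer $k$, a perfect matching $M$ is $k$-local maximum if for every subset $M'=\{a_1b_1,\dots,a_kb_k\}$ of $k$ edges of $M$, $M'$ is a maximum-length perfect matching on the point set $\{a_1,b_1,\dots,a_k,b_k\}$. *)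

(* Defs.v *)
From Stdlib Require Import Reals List Permutation.
Open Scope R_scope.

Definition point := (R * R)%type.
Definition edge := (point * point)%type.

Definition dist (a b : point) : R :=
  sqrt ((fst a - fst b) ^ 2 + (snd a - snd b) ^ 2).

Fixpoint endpoints (M : list edge) : list point :=
  match M with
  | nil => nil
  | (a, b) :: M' => a :: b :: endpoints M'
  end.

Fixpoint weight (M : list edge) : R :=
  match M with
  | nil => 0
  | (a, b) :: M' => dist a b + weight M'
  end.

(* M is a perfect matching on the point set P (given as a duplicate-free list):
   the endpoints of the edges of M are exactly the points of P, each once. *)
Definition perfect_matching (P : list point) (M : list edge) : Prop :=
  Permutation (endpoints M) P.

Definition max_matching (P : list point) (M : list edge) : Prop :=
  perfect_matching P M /\
  forall M', perfect_matching P M' -> weight M' <= weight M.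

(* k-local maximum: every k-subset M' of edges of M is a maximum-length
   perfect matching on the 2k endpoints of M'. *)
Definition k_local_max (k : nat) (P : list point) (M : list edge) : Prop :=
  perfect_matching P M /\
  forall M' rest, length M' = k -> Permutation M (M' ++ rest) ->
    max_matching (endpoints M') M'.

(* Main.v *)
Require Import Defs.
From Stdlib Require Import Reals List Permutation.
Open Scope R_scope.
From Stdlib Require Import Lra Lia Psatz Classical ClassicalEpsilon.
Import Defs ListNotations.
Open Scope R_scope.


Lemma pow2_sq : forall x, x ^ 2 = x * x.
Proof. intros; ring. Qed.

Lemma sqrt_le_of_sq : forall u s, 0 <= s -> u <= s * s -> sqrt u <= s.
Proof.
  intros u s Hs Hu. rewrite <- (sqrt_square s Hs). apply sqrt_le_1_alt. exact Hu.
Qed.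

Lemma sqrt_sum_le : forall x1 y1 x2 y2,
  sqrt ((x1 + x2) ^ 2 + (y1 + y2) ^ 2) <= sqrt (x1 ^ 2 + y1 ^ 2) + sqrt (x2 ^ 2 + y2 ^ 2).
Proof.
  intros. rewrite !pow2_sq.
  assert (HA : 0 <= x1 * x1 + y1 * y1) by nra.
  assert (HB : 0 <= x2 * x2 + y2 * y2) by nra.
  set (S1 := sqrt (x1 * x1 + y1 * y1)). set (S2 := sqrt (x2 * x2 + y2 * y2)).
  assert (E1 : S1 * S1 = x1 * x1 + y1 * y1) by (apply sqrt_sqrt; exact HA).
  assert (E2 : S2 * S2 = x2 * x2 + y2 * y2) by (apply sqrt_sqrt; exact HB).
  assert (P1 : 0 <= S1) by apply sqrt_pos.
  assert (P2 : 0 <= S2) by apply sqrt_pos.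
  apply sqrt_le_of_sq; [lra|].
  assert (C : (x1 * x2 + y1 * y2) * (x1 * x2 + y1 * y2) <= (S1 * S2) * (S1 * S2)).
  { replace ((S1 * S2) * (S1 * S2)) with ((S1 * S1) * (S2 * S2)) by ring.
    rewrite E1, E2. pose proof (pow2_ge_0 (x1 * y2 - x2 * y1)). nra. }
  assert (C2 : x1 * x2 + y1 * y2 <= S1 * S2).
  { assert (0 <= S1 * S2) by (apply Rmult_le_pos; lra).
    destruct (Rle_or_lt (x1 * x2 + y1 * y2) (S1 * S2)) as [h|h]; [exact h|].
    exfalso. assert (0 < (x1 * x2 + y1 * y2) - S1 * S2) by lra.
    assert (0 < (x1 * x2 + y1 * y2) + S1 * S2) by lra.
    assert (0 < ((x1 * x2 + y1 * y2) - S1 * S2) * ((x1 * x2 + y1 * y2) + S1 * S2)) by (apply Rmult_lt_0_compat; lra).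
    nra. }
  nra.
Qed.

Lemma dist_nonneg : forall a b, 0 <= dist a b.
Proof. intros; unfold dist; apply sqrt_pos. Qed.

Lemma dist_sym : forall a b, dist a b = dist b a.
Proof. intros [a1 a2] [b1 b2]; unfold dist; simpl. f_equal; ring. Qed.

Lemma dist_tri : forall a b c, dist a c <= dist a b + dist b c.
Proof.
  intros [a1 a2] [b1 b2] [c1 c2]; unfold dist; simpl.
  replace (a1 - c1) with ((a1 - b1) + (b1 - c1)) by ring.
  replace (a2 - c2) with ((a2 - b2) + (b2 - c2)) by ring.
  apply sqrt_sum_le.
Qed.


Definition mid (a b : point) : point := ((fst a + fst b) / 2, (snd a + snd b) / 2).

Lemma sqrt_sum4 : forall x1 y1 x2 y2 x3 y3 x4 y4,
  sqrt ((x1 + x2 + x3 + x4) ^ 2 + (y1 + y2 + y3 + y4) ^ 2) <=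
  sqrt (x1 ^ 2 + y1 ^ 2) + sqrt (x2 ^ 2 + y2 ^ 2) + sqrt (x3 ^ 2 + y3 ^ 2) + sqrt (x4 ^ 2 + y4 ^ 2).
Proof.
  intros.
  eapply Rle_trans. apply sqrt_sum_le.
  apply Rplus_le_compat_r.
  eapply Rle_trans. apply sqrt_sum_le.
  apply Rplus_le_compat_r.
  apply sqrt_sum_le.
Qed.

Lemma sq_le_of_sqrt : forall X s, 0 <= X -> 0 <= s -> sqrt X <= s -> X <= s ^ 2.
Proof.
  intros X s HX Hs H. rewrite <- (sqrt_sqrt X HX).
  assert (0 <= sqrt X) by apply sqrt_pos. nra.
Qed.

Lemma mid_bound : forall a b c d,
  dist a c + dist b d <= dist a b + dist c d ->
  dist a d + dist b c <= dist a b + dist c d ->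
  (fst (mid a b) - fst (mid c d)) ^ 2 + (snd (mid a b) - snd (mid c d)) ^ 2
    <= (dist a b / 2 + dist c d / 2) ^ 2.
Proof.
  intros [a1 a2] [b1 b2] [c1 c2] [d1 d2] H1 H2.
  unfold mid; cbn [fst snd].
  set (X := ((a1 + b1) / 2 - (c1 + d1) / 2) ^ 2 + ((a2 + b2) / 2 - (c2 + d2) / 2) ^ 2).
  assert (HX : 0 <= X) by (unfold X; apply Rplus_le_le_0_compat; apply pow2_ge_0).
  pose proof (sqrt_sum4 (a1 - c1) (a2 - c2) (a1 - d1) (a2 - d2) (b1 - c1) (b2 - c2) (b1 - d1) (b2 - d2)) as S.
  assert (E : (a1 - c1 + (a1 - d1) + (b1 - c1) + (b1 - d1)) ^ 2 +
              (a2 - c2 + (a2 - d2) + (b2 - c2) + (b2 - d2)) ^ 2 = 4 * 4 * X) by (unfold X; field).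
  rewrite E in S. rewrite sqrt_mult in S by lra.
  rewrite sqrt_square in S by lra.
  unfold dist in H1, H2 |- *; cbn [fst snd] in H1, H2 |- *.
  apply sq_le_of_sqrt; [exact HX| |].
  - pose proof (sqrt_pos ((a1 - b1) ^ 2 + (a2 - b2) ^ 2)).
    pose proof (sqrt_pos ((c1 - d1) ^ 2 + (c2 - d2) ^ 2)). lra.
  - lra.
Qed.


Lemma le_of_sq_le : forall u v, 0 <= v -> u * u <= v * v -> u <= v.
Proof.
  intros u v Hv H. destruct (Rle_or_lt u v) as [h|h]; [exact h|].
  exfalso. assert (0 < (u - v) * (u + v)) by (apply Rmult_lt_0_compat; lra). nra.
Qed.

Lemma center_bound : forall a b O,
  (fst O - fst (mid a b)) ^ 2 + (snd O - snd (mid a b)) ^ 2 <= 4 / 3 * (dist a b / 2) ^ 2 ->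
  dist a O + dist b O <= sqrt (7 / 3) * dist a b.
Proof.
  intros [a1 a2] [b1 b2] [o1 o2] H.
  unfold mid, dist in *; cbn [fst snd] in *.
  set (D := sqrt ((a1 - b1) ^ 2 + (a2 - b2) ^ 2)) in *.
  set (s := sqrt ((a1 - o1) ^ 2 + (a2 - o2) ^ 2)).
  set (t := sqrt ((b1 - o1) ^ 2 + (b2 - o2) ^ 2)).
  assert (Hs : s * s = (a1 - o1) ^ 2 + (a2 - o2) ^ 2) by (apply sqrt_sqrt; apply Rplus_le_le_0_compat; apply pow2_ge_0).
  assert (Ht : t * t = (b1 - o1) ^ 2 + (b2 - o2) ^ 2) by (apply sqrt_sqrt; apply Rplus_le_le_0_compat; apply pow2_ge_0).
  assert (HD : D * D = (a1 - b1) ^ 2 + (a2 - b2) ^ 2) by (apply sqrt_sqrt; apply Rplus_le_le_0_compat; apply pow2_ge_0).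
  assert (Hk : sqrt (7/3) * sqrt (7/3) = 7/3) by (apply sqrt_sqrt; lra).
  assert (0 <= s) by apply sqrt_pos. assert (0 <= t) by apply sqrt_pos.
  assert (0 <= D) by apply sqrt_pos. assert (0 <= sqrt (7/3)) by apply sqrt_pos.
  apply le_of_sq_le. { apply Rmult_le_pos; lra. }
  clearbody s t D.
  assert (Hid : s * s + t * t = 2 * ((o1 - (a1 + b1) / 2) ^ 2 + (o2 - (a2 + b2) / 2) ^ 2) + D * D / 2)
    by (rewrite Hs, Ht, HD; field).
  assert ((s + t) * (s + t) <= 2 * (s * s + t * t)) by (pose proof (pow2_ge_0 (s - t)); lra).
  replace (sqrt (7 / 3) * D * (sqrt (7 / 3) * D)) with (sqrt (7/3) * sqrt (7/3) * (D * D)) by ring.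
  rewrite Hk. nra.
Qed.


Fixpoint sumd (O : point) (l : list point) : R :=
  match l with nil => 0 | p :: l' => dist p O + sumd O l' end.

Lemma sumd_perm : forall O l1 l2, Permutation l1 l2 -> sumd O l1 = sumd O l2.
Proof.
  intros O l1 l2 H; induction H; simpl; try lra.
Qed.

Lemma weight_le_sumd : forall O Ms, weight Ms <= sumd O (endpoints Ms).
Proof.
  intros O Ms; induction Ms as [|[a b] Ms IH]; simpl; [lra|].
  pose proof (dist_tri a O b). rewrite (dist_sym O b) in H. lra.
Qed.

Fixpoint esum (O : point) (M : list edge) : R :=
  match M with nil => 0 | (a, b) :: M' => dist a O + dist b O + esum O M' end.

Lemma sumd_endpoints : forall O M, sumd O (endpoints M) = esum O M.
Proof.
  intros O M; induction M as [|[a b] M IH]; simpl; [lra|]. rewrite IH. lra.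
Qed.

Lemma esum_le : forall O k M,
  (forall a b, In (a, b) M -> dist a O + dist b O <= k * dist a b) -> esum O M <= k * weight M.
Proof.
  intros O k M; induction M as [|[a b] M IH]; intros H; simpl; [lra|].
  assert (h1 := H a b (or_introl eq_refl)).
  assert (h2 : esum O M <= k * weight M) by (apply IH; intros; apply H; right; auto).
  lra.
Qed.

Lemma endpoints_app : forall l1 l2, endpoints (l1 ++ l2) = endpoints l1 ++ endpoints l2.
Proof. induction l1 as [|[a b] l1 IH]; intros; simpl; [auto|]. rewrite IH; auto. Qed.

Lemma nodup_edge : forall M a b, NoDup (endpoints M) -> In (a, b) M -> a <> b.
Proof.
  induction M as [|[x y] M IH]; intros a b H Hin; simpl in *; [contradiction|].
  destruct Hin as [E|Hin].
  - inversion E; subst. inversion H; subst. intros ->. apply H2. left; auto.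
  - inversion H; subst. inversion H3; subst. eapply IH; eauto.
Qed.

Lemma local2 : forall P M a b c d, k_local_max 2 P M -> In (a, b) M -> In (c, d) M ->
  (a, b) <> (c, d) ->
  dist a c + dist b d <= dist a b + dist c d /\ dist a d + dist b c <= dist a b + dist c d.
Proof.
  intros P M a b c d [_ HL] H1 H2 Hne.
  destruct (in_split _ _ H1) as [l1 [l2 E]].
  assert (H2' : In (c, d) (l1 ++ l2)).
  { rewrite E in H2. apply in_app_or in H2. apply in_or_app.
    destruct H2 as [h|[h|h]]; auto. congruence. }
  destruct (in_split _ _ H2') as [l3 [l4 E2]].
  assert (Hp : Permutation M ([(a, b); (c, d)] ++ (l3 ++ l4))).
  { rewrite E. simpl. eapply perm_trans. apply Permutation_sym, Permutation_middle.
    apply perm_skip. rewrite E2. apply Permutation_sym, Permutation_middle. }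
  destruct (HL _ _ (eq_refl : length [(a, b); (c, d)] = 2%nat) Hp) as [_ Hmax].
  split.
  - assert (W := Hmax [(a, c); (b, d)]).
    simpl in W. unfold perfect_matching in W. simpl in W.
    assert (Hq : Permutation [a; c; b; d] [a; b; c; d]) by (apply perm_skip; apply perm_swap).
    specialize (W Hq). lra.
  - assert (W := Hmax [(a, d); (b, c)]).
    simpl in W. unfold perfect_matching in W. simpl in W.
    assert (Hq : Permutation [a; d; b; c] [a; b; c; d]).
    { apply perm_skip. eapply perm_trans. apply perm_swap. apply perm_skip. apply perm_swap. }
    specialize (W Hq). lra.
Qed.


Definition disk := (point * R)%type.
Definition cx (d : disk) := fst (fst d).
Definition cy (d : disk) := snd (fst d).
Definition rd (d : disk) := snd d.

Definition num (d : disk) (x y : R) := (x - cx d) ^ 2 + (y - cy d) ^ 2.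
Definition g (d : disk) (x y : R) := num d x y / (rd d) ^ 2.

Fixpoint Fm (L : list disk) (x y : R) : R :=
  match L with nil => 0 | d :: L' => Rmax (g d x y) (Fm L' x y) end.

Lemma num_nonneg : forall d x y, 0 <= num d x y.
Proof. intros; unfold num; apply Rplus_le_le_0_compat; apply pow2_ge_0. Qed.

Lemma g_nonneg : forall d x y, 0 < rd d -> 0 <= g d x y.
Proof.
  intros d x y H; unfold g. apply Rle_mult_inv_pos. apply num_nonneg. apply pow_lt; exact H.
Qed.

Lemma g_lt_iff : forall d x y T, 0 < rd d -> (g d x y < T <-> num d x y < T * rd d ^ 2).
Proof.
  intros d x y T H. unfold g. assert (0 < rd d ^ 2) by (apply pow_lt; exact H).
  split; intro h.
  - apply Rmult_lt_reg_r with (/ (rd d ^ 2)). apply Rinv_0_lt_compat; lra.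
    replace (T * rd d ^ 2 * / rd d ^ 2) with T by (field; lra). exact h.
  - unfold Rdiv. apply Rmult_lt_reg_r with (rd d ^ 2); [lra|].
    replace (num d x y * / rd d ^ 2 * rd d ^ 2) with (num d x y) by (field; lra). exact h.
Qed.

Lemma g_le_iff : forall d x y T, 0 < rd d -> (g d x y <= T <-> num d x y <= T * rd d ^ 2).
Proof.
  intros d x y T H. split; intro h.
  - destruct (Rle_or_lt (num d x y) (T * rd d ^ 2)) as [h'|h']; [exact h'|].
    exfalso. assert (T < g d x y).
    { apply (g_lt_iff d x y (g d x y)) in H as Hh.
      unfold g at 2 in Hh. unfold g. 
      assert (0 < rd d ^ 2) by (apply pow_lt; exact H).
      apply Rmult_lt_reg_r with (rd d ^ 2); [lra|].
      unfold Rdiv. replace (num d x y * / rd d ^ 2 * rd d ^ 2) with (num d x y) by (field; lra). lra. }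
    lra.
  - destruct (Rle_or_lt (g d x y) T) as [h'|h']; [exact h'|].
    exfalso. assert (0 < rd d ^ 2) by (apply pow_lt; exact H).
    unfold g in h'. apply (Rmult_lt_compat_r (rd d ^ 2)) in h'; [|lra].
    unfold Rdiv in h'. replace (num d x y * / rd d ^ 2 * rd d ^ 2) with (num d x y) in h' by (field; lra).
    lra.
Qed.

Lemma Fm_ge : forall L d x y, In d L -> g d x y <= Fm L x y.
Proof.
  induction L as [|e L IH]; intros d x y H; simpl in *; [contradiction|].
  destruct H as [<-|H]. apply Rmax_l. eapply Rle_trans. apply IH; exact H. apply Rmax_r.
Qed.

Lemma Fm_attained : forall L x y, L <> nil -> (forall d, In d L -> 0 < rd d) ->
  exists d, In d L /\ Fm L x y = g d x y.
Proof.
  induction L as [|e L IH]; intros x y Hn Hr; [congruence|].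
  simpl. destruct L as [|e' L'].
  - exists e; split; [left; auto|]. simpl. apply Rmax_left.
    apply g_nonneg, Hr; left; auto.
  - destruct (IH x y) as [d [Hd Ed]]; [congruence| intros; apply Hr; right; auto |].
    destruct (Rle_or_lt (g e x y) (Fm (e' :: L') x y)) as [h|h].
    + exists d; split; [right; auto|]. rewrite Rmax_right by exact h. exact Ed.
    + exists e; split; [left; auto|]. apply Rmax_left; lra.
Qed.

Lemma Fm_lt : forall L x y T, L <> nil -> (forall d, In d L -> 0 < rd d) ->
  (forall d, In d L -> g d x y < T) -> Fm L x y < T.
Proof.
  intros L x y T Hn Hr H. destruct (Fm_attained L x y Hn Hr) as [d [Hd ->]]. apply H; exact Hd.
Qed.

Lemma Fm_nonneg : forall L x y, 0 <= Fm L x y.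
Proof.
  induction L as [|e L IH]; intros; simpl; [lra|]. eapply Rle_trans; [apply IH|apply Rmax_r].
Qed.


Definition clamp (K x : R) := Rmax (- K) (Rmin K x).

Lemma clamp_in : forall K x, 0 <= K -> -K <= clamp K x <= K.
Proof. intros; unfold clamp, Rmax, Rmin; repeat destruct Rle_dec; lra. Qed.

Lemma clamp_id : forall K x, -K <= x <= K -> clamp K x = x.
Proof. intros; unfold clamp, Rmax, Rmin; repeat destruct Rle_dec; lra. Qed.

Lemma clamp_lip : forall K x x', 0 <= K -> Rabs (clamp K x - clamp K x') <= Rabs (x - x').
Proof.
  intros; unfold clamp, Rmax, Rmin; repeat destruct Rle_dec;
  unfold Rabs; repeat destruct Rcase_abs; lra.
Qed.

Lemma prod_bound : forall u w C, Rabs w <= C -> u * w <= Rabs u * C.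
Proof.
  intros u w C H. eapply Rle_trans. apply Rle_abs. rewrite Rabs_mult.
  apply Rmult_le_compat_l; [apply Rabs_pos|exact H].
Qed.

Lemma g_lip : forall K d, 0 <= K -> 0 < rd d -> exists Ld, 0 <= Ld /\
  forall X Y X' Y', -K <= X <= K -> -K <= Y <= K -> -K <= X' <= K -> -K <= Y' <= K ->
  g d X Y <= g d X' Y' + Ld * (Rabs (X - X') + Rabs (Y - Y')).
Proof.
  intros K d HK Hr.
  set (C := 2 * K + 2 * Rabs (cx d) + 2 * Rabs (cy d)).
  assert (HC : 0 <= C) by (unfold C; pose proof (Rabs_pos (cx d)); pose proof (Rabs_pos (cy d)); lra).
  assert (Hr2 : 0 < rd d ^ 2) by (apply pow_lt; exact Hr).
  exists (C / rd d ^ 2). split. { apply Rle_mult_inv_pos; lra. }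
  intros X Y X' Y' h1 h2 h3 h4.
  assert (E : num d X Y = num d X' Y' + (X - X') * (X + X' - 2 * cx d) + (Y - Y') * (Y + Y' - 2 * cy d))
    by (unfold num; ring).
  assert (B1 : Rabs (X + X' - 2 * cx d) <= C).
  { unfold C. unfold Rabs at 1; destruct Rcase_abs;
    pose proof (Rle_abs (cx d)); pose proof (Rle_abs (- cx d)); rewrite Rabs_Ropp in *;
    pose proof (Rabs_pos (cy d)); lra. }
  assert (B2 : Rabs (Y + Y' - 2 * cy d) <= C).
  { unfold C. unfold Rabs at 1; destruct Rcase_abs;
    pose proof (Rle_abs (cy d)); pose proof (Rle_abs (- cy d)); rewrite Rabs_Ropp in *;
    pose proof (Rabs_pos (cx d)); lra. }
  pose proof (prod_bound (X - X') _ _ B1). pose proof (prod_bound (Y - Y') _ _ B2).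
  assert (N : num d X Y <= num d X' Y' + C * (Rabs (X - X') + Rabs (Y - Y'))) by lra.
  unfold g, Rdiv.
  replace (num d X' Y' * / rd d ^ 2 + C * / rd d ^ 2 * (Rabs (X - X') + Rabs (Y - Y')))
    with ((num d X' Y' + C * (Rabs (X - X') + Rabs (Y - Y'))) * / rd d ^ 2) by ring.
  apply Rmult_le_compat_r; [left; apply Rinv_0_lt_compat; exact Hr2| exact N].
Qed.

Lemma Fm_lip : forall K L, 0 <= K -> (forall d, In d L -> 0 < rd d) -> exists Lc, 0 <= Lc /\
  forall X Y X' Y', -K <= X <= K -> -K <= Y <= K -> -K <= X' <= K -> -K <= Y' <= K ->
  Fm L X Y <= Fm L X' Y' + Lc * (Rabs (X - X') + Rabs (Y - Y')).
Proof.
  intros K L HK; induction L as [|d L IH]; intros Hr.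
  - exists 0; split; [lra|]. intros; simpl; lra.
  - destruct IH as [LF [HLF HF]]; [intros; apply Hr; right; auto|].
    destruct (g_lip K d HK (Hr d (or_introl eq_refl))) as [Ld [HLd Hg]].
    exists (Ld + LF); split; [lra|].
    intros X Y X' Y' h1 h2 h3 h4. simpl.
    assert (0 <= Rabs (X - X') + Rabs (Y - Y')) by (pose proof (Rabs_pos (X - X')); pose proof (Rabs_pos (Y - Y')); lra).
    specialize (Hg X Y X' Y' h1 h2 h3 h4). specialize (HF X Y X' Y' h1 h2 h3 h4).
    pose proof (Rmax_l (g d X' Y') (Fm L X' Y')). pose proof (Rmax_r (g d X' Y') (Fm L X' Y')).
    apply Rmax_lub.
    + assert (0 <= LF * (Rabs (X - X') + Rabs (Y - Y'))) by (apply Rmult_le_pos; lra). nra.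
    + assert (0 <= Ld * (Rabs (X - X') + Rabs (Y - Y'))) by (apply Rmult_le_pos; lra). nra.
Qed.

Lemma lip_cont : forall f Lc, 0 <= Lc -> (forall x x', f x <= f x' + Lc * Rabs (x - x')) ->
  forall x, continuity_pt f x.
Proof.
  intros f Lc HL H x. unfold continuity_pt, continue_in, limit1_in, limit_in.
  intros eps Heps. exists (eps / (Lc + 1)). split.
  { apply Rdiv_lt_0_compat; lra. }
  intros x' [_ Hd]. simpl in *. unfold R_dist in *.
  assert (h1 := H x' x). assert (h2 := H x x').
  rewrite Rabs_minus_sym in h2.
  assert (Lc * Rabs (x' - x) <= Lc * (eps / (Lc + 1))) by (apply Rmult_le_compat_l; lra).
  assert (Lc * (eps / (Lc + 1)) < eps).
  { apply Rmult_lt_reg_r with (Lc + 1); [lra|]. unfold Rdiv.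
    replace (Lc * (eps * / (Lc + 1)) * (Lc + 1)) with (Lc * eps) by (field; lra). nra. }
  unfold Rabs at 1; destruct Rcase_abs; lra.
Qed.


Lemma box_min : forall L K, 0 <= K -> (forall d, In d L -> 0 < rd d) ->
  exists xm ym, -K <= xm <= K /\ -K <= ym <= K /\
    forall x y, -K <= x <= K -> -K <= y <= K -> Fm L xm ym <= Fm L x y.
Proof.
  intros L K HK Hr.
  destruct (Fm_lip K L HK Hr) as [Lc [HLc HF]].
  set (G := fun x y => Fm L (clamp K x) (clamp K y)).
  assert (HG : forall x y x' y', G x y <= G x' y' + Lc * (Rabs (x - x') + Rabs (y - y'))).
  { intros. unfold G. eapply Rle_trans.
    apply HF; apply clamp_in; exact HK.
    apply Rplus_le_compat_l, Rmult_le_compat_l; [lra|].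
    pose proof (clamp_lip K x x' HK). pose proof (clamp_lip K y y' HK). lra. }
  assert (Hy : forall x, exists y, -K <= y <= K /\ forall y', -K <= y' <= K -> G x y <= G x y').
  { intro x. destruct (continuity_ab_min (fun y => G x y) (-K) K) as [m [Hm1 Hm2]]; [lra| |].
    - intros c _. apply lip_cont with Lc; [lra|]. intros y y'. specialize (HG x y x y').
      rewrite Rminus_diag, Rabs_R0 in HG. lra.
    - exists m; split; auto. }
  set (ym := fun x => proj1_sig (constructive_indefinite_description _ (Hy x))).
  assert (Hym : forall x, -K <= ym x <= K /\ forall y', -K <= y' <= K -> G x (ym x) <= G x y').
  { intro x; unfold ym; destruct constructive_indefinite_description; simpl; auto. }
  set (phi := fun x => G x (ym x)).
  assert (Hphi : forall x x', phi x <= phi x' + Lc * Rabs (x - x')).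
  { intros. unfold phi. destruct (Hym x) as [_ h]. destruct (Hym x') as [hb _].
    eapply Rle_trans. apply h, hb. specialize (HG x (ym x') x' (ym x')).
    rewrite Rminus_diag, Rabs_R0 in HG. lra. }
  destruct (continuity_ab_min phi (-K) K) as [xm [Hx2 Hx1]];
    [lra| intros; apply lip_cont with Lc; auto|].
  exists xm, (ym xm). destruct (Hym xm) as [hb _].
  split; [auto|split; [auto|]].
  intros x y hx hy.
  assert (H1 : G xm (ym xm) <= G x y).
  { change (G xm (ym xm)) with (phi xm). eapply Rle_trans. apply Hx2; exact hx.
    unfold phi. apply (proj2 (Hym x)). exact hy. }
  unfold G in H1. rewrite !clamp_id in H1 by auto. exact H1.
Qed.


Lemma step_A : forall n0 dot V T2, 0 <= V -> n0 < T2 ->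
  exists s0, 0 < s0 /\ forall s, 0 < s <= s0 -> n0 - 2 * s * dot + s ^ 2 * V < T2.
Proof.
  intros n0 dot V T2 HV H.
  set (D := 2 * Rabs dot + V + 1).
  assert (HD : 0 < D) by (unfold D; pose proof (Rabs_pos dot); lra).
  exists (Rmin 1 ((T2 - n0) / D)). split.
  { apply Rmin_pos; [lra|]. apply Rdiv_lt_0_compat; lra. }
  intros s [h1 h2].
  assert (hs1 : s <= 1) by (eapply Rle_trans; [exact h2|apply Rmin_l]).
  assert (hs2 : s <= (T2 - n0) / D) by (eapply Rle_trans; [exact h2|apply Rmin_r]).
  assert (hs3 : s * D <= T2 - n0).
  { apply Rmult_le_reg_r with (/ D). apply Rinv_0_lt_compat; lra.
    replace (s * D * / D) with s by (field; lra). exact hs2. }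
  assert (e1 : - (2 * s * dot) <= 2 * s * Rabs dot).
  { pose proof (Rle_abs (- dot)). rewrite Rabs_Ropp in H0. nra. }
  assert (e2 : s ^ 2 * V <= s * V).
  { replace (s ^ 2 * V) with (s * (s * V)) by ring.
    assert (0 <= s * V) by (apply Rmult_le_pos; lra). nra. }
  unfold D in hs3. lra.
Qed.

Lemma step_B : forall n0 dot V T2, 0 <= V -> 0 < dot -> n0 <= T2 ->
  exists s0, 0 < s0 /\ forall s, 0 < s <= s0 -> n0 - 2 * s * dot + s ^ 2 * V < T2.
Proof.
  intros n0 dot V T2 HV Hd H.
  exists (dot / (V + 1)). split. { apply Rdiv_lt_0_compat; lra. }
  intros s [h1 h2].
  assert (h3 : s * (V + 1) <= dot).
  { apply Rmult_le_reg_r with (/ (V + 1)). apply Rinv_0_lt_compat; lra.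
    replace (s * (V + 1) * / (V + 1)) with s by (field; lra). exact h2. }
  assert (h4 : s * V < dot) by lra.
  assert (h5 : s * (s * V) < s * dot) by (apply Rmult_lt_compat_l; lra).
  assert (0 < s * dot) by (apply Rmult_lt_0_compat; lra).
  replace (s ^ 2 * V) with (s * (s * V)) by ring. lra.
Qed.

Lemma combine_small : forall (A : Type) (l : list A) (Q : A -> R -> Prop),
  (forall a, In a l -> exists s0, 0 < s0 /\ forall s, 0 < s <= s0 -> Q a s) ->
  exists s0, 0 < s0 /\ forall s, 0 < s <= s0 -> forall a, In a l -> Q a s.
Proof.
  intros A l Q; induction l as [|a l IH]; intros H.
  - exists 1; split; [lra|]. intros s _ a [].
  - destruct IH as [s1 [Hs1 H1]]; [intros; apply H; right; auto|].
    destruct (H a (or_introl eq_refl)) as [s2 [Hs2 H2]].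
    exists (Rmin s1 s2); split; [apply Rmin_pos; auto|].
    intros s [h1 h2] b [<-|Hb].
    + apply H2; split; [auto|]. eapply Rle_trans; [exact h2|apply Rmin_r].
    + apply H1; [split; [auto|]; eapply Rle_trans; [exact h2|apply Rmin_l]|exact Hb].
Qed.

Lemma num_shift : forall d xm ym v1 v2 s,
  num d (xm + s * v1) (ym + s * v2) =
  num d xm ym - 2 * s * (v1 * (cx d - xm) + v2 * (cy d - ym)) + s ^ 2 * (v1 ^ 2 + v2 ^ 2).
Proof. intros; unfold num; ring. Qed.

Lemma descent : forall L K xm ym, L <> nil -> (forall d, In d L -> 0 < rd d) ->
  -K < xm < K -> -K < ym < K ->
  (forall x y, -K <= x <= K -> -K <= y <= K -> Fm L xm ym <= Fm L x y) ->
  forall v1 v2, exists d, In d L /\ g d xm ym = Fm L xm ym /\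
     v1 * (cx d - xm) + v2 * (cy d - ym) <= 0.
Proof.
  intros L K xm ym Hn Hr Hx Hy Hmin v1 v2.
  apply NNPP; intro Hc.
  set (T := Fm L xm ym).
  assert (Hall : forall d, In d L -> exists s0, 0 < s0 /\ forall s, 0 < s <= s0 ->
             g d (xm + s * v1) (ym + s * v2) < T).
  { intros d Hd.
    assert (Hle : g d xm ym <= T) by (apply Fm_ge; exact Hd).
    assert (Hrd := Hr d Hd).
    assert (HV : 0 <= v1 ^ 2 + v2 ^ 2) by (apply Rplus_le_le_0_compat; apply pow2_ge_0).
    assert (Hcase : g d xm ym < T \/ 0 < v1 * (cx d - xm) + v2 * (cy d - ym)).
    { destruct (Rle_or_lt (v1 * (cx d - xm) + v2 * (cy d - ym)) 0) as [h|h]; [|right; exact h].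
      left. destruct Hle as [h'|h']; [exact h'|]. exfalso. apply Hc. exists d; auto. }
    destruct Hcase as [h|h].
    - apply g_lt_iff in h; [|exact Hrd].
      destruct (step_A (num d xm ym) (v1 * (cx d - xm) + v2 * (cy d - ym)) (v1 ^ 2 + v2 ^ 2)
                  (T * rd d ^ 2) HV h) as [s0 [Hs0 Hs]].
      exists s0; split; [exact Hs0|]. intros s hs. apply g_lt_iff; [exact Hrd|].
      rewrite num_shift. apply Hs; exact hs.
    - apply g_le_iff in Hle; [|exact Hrd].
      destruct (step_B (num d xm ym) (v1 * (cx d - xm) + v2 * (cy d - ym)) (v1 ^ 2 + v2 ^ 2)
                  (T * rd d ^ 2) HV h Hle) as [s0 [Hs0 Hs]].
      exists s0; split; [exact Hs0|]. intros s hs. apply g_lt_iff; [exact Hrd|].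
      rewrite num_shift. apply Hs; exact hs. }
  destruct (combine_small _ L _ Hall) as [s0 [Hs0 Hs]].
  set (sb := Rmin ((K - Rabs xm) / (Rabs v1 + 1)) ((K - Rabs ym) / (Rabs v2 + 1))).
  assert (Hax : Rabs xm < K) by (unfold Rabs; destruct Rcase_abs; lra).
  assert (Hay : Rabs ym < K) by (unfold Rabs; destruct Rcase_abs; lra).
  assert (Hsb : 0 < sb).
  { unfold sb; apply Rmin_pos; apply Rdiv_lt_0_compat; pose proof (Rabs_pos v1); pose proof (Rabs_pos v2); lra. }
  set (s := Rmin s0 sb).
  assert (Hs1 : 0 < s) by (apply Rmin_pos; auto).
  assert (Hs2 : s <= s0) by apply Rmin_l.
  assert (Hs3 : s <= sb) by apply Rmin_r.
  assert (Bx : -K <= xm + s * v1 <= K).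
  { assert (s <= (K - Rabs xm) / (Rabs v1 + 1)) by (eapply Rle_trans; [exact Hs3|apply Rmin_l]).
    assert (s * (Rabs v1 + 1) <= K - Rabs xm).
    { apply Rmult_le_reg_r with (/ (Rabs v1 + 1)). apply Rinv_0_lt_compat; pose proof (Rabs_pos v1); lra.
      replace (s * (Rabs v1 + 1) * / (Rabs v1 + 1)) with s by (field; pose proof (Rabs_pos v1); lra). auto. }
    assert (Rabs (xm + s * v1) <= K).
    { eapply Rle_trans. apply Rabs_triang. rewrite Rabs_mult, (Rabs_pos_eq s) by lra.
      pose proof (Rabs_pos v1). lra. }
    revert H1; unfold Rabs; destruct Rcase_abs; intros; lra. }
  assert (By : -K <= ym + s * v2 <= K).
  { assert (s <= (K - Rabs ym) / (Rabs v2 + 1)) by (eapply Rle_trans; [exact Hs3|apply Rmin_r]).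
    assert (s * (Rabs v2 + 1) <= K - Rabs ym).
    { apply Rmult_le_reg_r with (/ (Rabs v2 + 1)). apply Rinv_0_lt_compat; pose proof (Rabs_pos v2); lra.
      replace (s * (Rabs v2 + 1) * / (Rabs v2 + 1)) with s by (field; pose proof (Rabs_pos v2); lra). auto. }
    assert (Rabs (ym + s * v2) <= K).
    { eapply Rle_trans. apply Rabs_triang. rewrite Rabs_mult, (Rabs_pos_eq s) by lra.
      pose proof (Rabs_pos v2). lra. }
    revert H1; unfold Rabs; destruct Rcase_abs; intros; lra. }
  assert (Hlt : Fm L (xm + s * v1) (ym + s * v2) < T).
  { apply Fm_lt; [exact Hn|exact Hr|]. intros d Hd. apply Hs; auto. }
  assert (Hge := Hmin _ _ Bx By). fold T in Hge. lra.
Qed.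


Lemma exists_min : forall (B : Type) (l : list B) (Pr : B -> Prop) (h : B -> R),
  (exists b, In b l /\ Pr b) ->
  exists b, In b l /\ Pr b /\ forall b', In b' l -> Pr b' -> h b <= h b'.
Proof.
  intros B l Pr h; induction l as [|a l IH]; intros [b [Hb Pb]]; [destruct Hb|].
  destruct (classic (exists b, In b l /\ Pr b)) as [Ex|NEx].
  - destruct (IH Ex) as [m [Hm [Pm Hmin]]].
    destruct (classic (Pr a)) as [Pa|NPa].
    + destruct (Rle_or_lt (h a) (h m)) as [c|c].
      * exists a; split; [left; auto|split; [auto|]].
        intros b' [<-|Hb'] Pb'; [lra|]. specialize (Hmin b' Hb' Pb'). lra.
      * exists m; split; [right; auto|split; [auto|]].
        intros b' [<-|Hb'] Pb'; [lra|]. apply Hmin; auto.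
    + exists m; split; [right; auto|split; [auto|]].
      intros b' [<-|Hb'] Pb'; [contradiction|]. apply Hmin; auto.
  - destruct Hb as [->|Hb]; [|exfalso; apply NEx; exists b; auto].
    exists b; split; [left; auto|split; [auto|]].
    intros b' [<-|Hb'] Pb'; [lra|]. exfalso; apply NEx; exists b'; auto.
Qed.

Lemma gram2 : forall px py qx qy kx ky,
  let Np := px * px + py * py in let Nq := qx * qx + qy * qy in let Nk := kx * kx + ky * ky in
  let c := px * qx + py * qy in let x := kx * px + ky * py in let y := kx * qx + ky * qy in
  Np * Nq * Nk + 2 * c * x * y - Np * (y * y) - Nq * (x * x) - Nk * (c * c) = 0.
Proof. intros; unfold Np, Nq, Nk, c, x, y; ring. Qed.

Lemma scalar_contra : forall T c x y, 0 < T -> - T / 2 < c -> c <= x -> c <= y -> x + y <= 0 ->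
  T * T * T + 2 * c * x * y - T * (y * y) - T * (x * x) - T * (c * c) = 0 -> False.
Proof.
  intros T c x y HT Hc Hx Hy Hxy E.
  destruct (Rle_or_lt 0 c) as [c0|c0].
  - assert (x = 0) by lra. assert (y = 0) by lra. subst x y.
    assert (T * (T * T - c * c) = 0) by lra.
    apply Rmult_integral in H. destruct H as [H|H]; [lra|].
    assert ((T - c) * (T + c) = 0) by lra.
    apply Rmult_integral in H0. destruct H0; lra.
  - assert (h1 : (x - c) * (- c - x) >= 0) by (apply Rle_ge, Rmult_le_pos; lra).
    assert (h2 : (y - c) * (- c - y) >= 0) by (apply Rle_ge, Rmult_le_pos; lra).
    assert (h3 : (x - c) * (- c - y) >= 0) by (apply Rle_ge, Rmult_le_pos; lra).
    assert (h4 : (y - c) * (- c - x) >= 0) by (apply Rle_ge, Rmult_le_pos; lra).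
    assert (hxx : x * x <= c * c) by lra.
    assert (hyy : y * y <= c * c) by lra.
    assert (hxy : x * y <= c * c) by lra.
    assert (k1 : T * (x * x) <= T * (c * c)) by (apply Rmult_le_compat_l; lra).
    assert (k2 : T * (y * y) <= T * (c * c)) by (apply Rmult_le_compat_l; lra).
    assert (k3 : (- 2 * c) * (x * y) <= (- 2 * c) * (c * c)) by (apply Rmult_le_compat_l; lra).
    assert (F : (c - T) * (c - T) * (2 * c + T) > 0).
    { apply Rmult_gt_0_compat; [|lra]. assert (0 < T - c) by lra. nra. }
    assert (E2 : (c - T) * (c - T) * (2 * c + T) = 2 * (c * c * c) - 3 * (c * c) * T + T * T * T) by ring.
    lra.
Qed.

Lemma div_nonpos : forall a r, a <= 0 -> 0 < r -> a / r <= 0.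
Proof.
  intros a r Ha Hr. unfold Rdiv. assert (0 < / r) by (apply Rinv_0_lt_compat; exact Hr).
  assert (a * / r <= 0 * / r) by (apply Rmult_le_compat_r; lra). lra.
Qed.

Lemma angle_contra : forall L xm ym T,
  (forall d, In d L -> 0 < rd d) ->
  (forall d1 d2, In d1 L -> In d2 L ->
     (cx d1 - cx d2) ^ 2 + (cy d1 - cy d2) ^ 2 <= (rd d1 + rd d2) ^ 2) ->
  4 / 3 < T ->
  (forall v1 v2, exists d, In d L /\ g d xm ym = T /\ v1 * (cx d - xm) + v2 * (cy d - ym) <= 0) ->
  False.
Proof.
  intros L xm ym T Hr Hpair HT Hdesc.
  set (ux := fun d => (cx d - xm) / rd d).
  set (uy := fun d => (cy d - ym) / rd d).
  set (act := fun d => g d xm ym = T).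
  assert (Hn : forall d, In d L -> act d -> ux d * ux d + uy d * uy d = T).
  { intros d Hd Ha. unfold act, g, num in Ha. rewrite <- Ha. unfold ux, uy.
    assert (rd d <> 0) by (specialize (Hr d Hd); lra). field. auto. }
  assert (Hdot : forall v1 v2, exists d, In d L /\ act d /\ v1 * ux d + v2 * uy d <= 0).
  { intros v1 v2. destruct (Hdesc v1 v2) as [d [Hd [Ha Hv]]]. exists d.
    split; [auto|split; [auto|]].
    assert (Hrd := Hr d Hd).
    unfold ux, uy.
    replace (v1 * ((cx d - xm) / rd d) + v2 * ((cy d - ym) / rd d))
      with ((v1 * (cx d - xm) + v2 * (cy d - ym)) / rd d) by (field; lra).
    apply div_nonpos; auto. }
  set (ip := fun p q => ux p * ux q + uy p * uy q).
  destruct (exists_min _ (list_prod L L) (fun pq => act (fst pq) /\ act (snd pq))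
              (fun pq => ip (fst pq) (snd pq))) as [[p q] [Hpq [[Ap Aq] Hmin]]].
  { destruct (Hdot 0 0) as [d [Hd [Ad _]]]. exists (d, d). split.
    apply in_prod; auto. simpl; auto. }
  apply in_prod_iff in Hpq; destruct Hpq as [Hp Hq]. simpl in Ap, Aq, Hmin.
  destruct (Rle_or_lt (ip p q) (- T / 2)) as [Hc|Hc].
  - assert (rp := Hr p Hp). assert (rq := Hr q Hq).
    specialize (Hpair p q Hp Hq).
    assert (ex : cx p - cx q = rd p * ux p - rd q * ux q) by (unfold ux; field; split; lra).
    assert (ey : cy p - cy q = rd p * uy p - rd q * uy q) by (unfold uy; field; split; lra).
    rewrite ex, ey in Hpair.
    assert (Np := Hn p Hp Ap). assert (Nq := Hn q Hq Aq).
    assert (Id : (rd p * ux p - rd q * ux q) ^ 2 + (rd p * uy p - rd q * uy q) ^ 2 =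
                 rd p * rd p * (ux p * ux p + uy p * uy p) + rd q * rd q * (ux q * ux q + uy q * uy q)
                 - 2 * (rd p * rd q) * ip p q) by (unfold ip; ring).
    rewrite Id, Np, Nq in Hpair.
    assert (rr : 0 < rd p * rd q) by (apply Rmult_lt_0_compat; lra).
    assert (k1 : (rd p * rd q) * ip p q <= (rd p * rd q) * (- T / 2)) by (apply Rmult_le_compat_l; lra).
    assert (k2 : 0 < rd p * rd p + rd q * rd q + rd p * rd q) by (pose proof (Rmult_lt_0_compat _ _ rp rp); pose proof (Rmult_lt_0_compat _ _ rq rq); lra).
    assert (k3 : (T - 4 / 3) * (rd p * rd p + rd q * rd q + rd p * rd q) > 0) by (apply Rmult_gt_0_compat; lra).
    assert (k4 : 0 <= (rd p - rd q) * (rd p - rd q)) by (apply Rle_0_sqr).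
    lra.
  - destruct (Hdot (ux p + ux q) (uy p + uy q)) as [k [Hk [Ak Hv]]].
    assert (m1 := Hmin (k, p) (in_prod _ _ _ _ Hk Hp) (conj Ak Ap)).
    assert (m2 := Hmin (k, q) (in_prod _ _ _ _ Hk Hq) (conj Ak Aq)).
    simpl in m1, m2.
    pose proof (gram2 (ux p) (uy p) (ux q) (uy q) (ux k) (uy k)) as G. cbv zeta in G.
    rewrite (Hn p Hp Ap), (Hn q Hq Aq), (Hn k Hk Ak) in G.
    apply (scalar_contra T (ip p q) (ip k p) (ip k q)); try lra.
    + unfold ip; lra.
    + unfold ip. lra.
Qed.


Lemma big_sq : forall z t W, 0 <= W -> W + 1 <= t -> t <= z -> W < z ^ 2.
Proof.
  intros z t W HW H1 H2. assert (h : 0 <= (z - 1) * z) by (apply Rmult_le_pos; lra).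
  replace (z ^ 2) with (z * z) by ring. lra.
Qed.

Lemma big_sq' : forall z t W, 0 <= W -> W + 1 <= t -> z <= - t -> W < z ^ 2.
Proof.
  intros z t W HW H1 H2. replace (z ^ 2) with ((- z) ^ 2) by ring. apply big_sq with t; lra.
Qed.

Lemma disk_lemma : forall L : list disk,
  (forall d, In d L -> 0 < rd d) ->
  (forall d1 d2, In d1 L -> In d2 L ->
     (cx d1 - cx d2) ^ 2 + (cy d1 - cy d2) ^ 2 <= (rd d1 + rd d2) ^ 2) ->
  exists O : point, forall d, In d L ->
     (fst O - cx d) ^ 2 + (snd O - cy d) ^ 2 <= 4 / 3 * rd d ^ 2.
Proof.
  intros L Hr Hpair.
  destruct L as [|d1 L'] eqn:EL.
  { exists (0, 0). intros d []. }
  rewrite <- EL in *.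
  assert (Hn : L <> nil) by (rewrite EL; discriminate).
  assert (Hd1 : In d1 L) by (rewrite EL; left; auto).
  set (V := Fm L (cx d1) (cy d1)).
  assert (HV : 0 <= V) by apply Fm_nonneg.
  assert (r1 := Hr d1 Hd1).
  assert (HW : 0 <= V * rd d1 ^ 2) by (apply Rmult_le_pos; [lra|apply pow2_ge_0]).
  set (K := Rabs (cx d1) + Rabs (cy d1) + V * rd d1 ^ 2 + 1).
  assert (ax1 := Rle_abs (cx d1)). assert (ax2 := Rle_abs (- cx d1)). rewrite Rabs_Ropp in ax2.
  assert (ay1 := Rle_abs (cy d1)). assert (ay2 := Rle_abs (- cy d1)). rewrite Rabs_Ropp in ay2.
  assert (HK : 0 <= K) by (unfold K; lra).
  destruct (box_min L K HK Hr) as [xm [ym [Bx [By Hmin]]]].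
  assert (HFV : Fm L xm ym <= V) by (apply Hmin; unfold K; lra).
  assert (Hg1 : num d1 xm ym <= V * rd d1 ^ 2).
  { apply g_le_iff; [lra|]. eapply Rle_trans; [apply Fm_ge; exact Hd1|exact HFV]. }
  unfold num in Hg1.
  assert (p1 := pow2_ge_0 (xm - cx d1)). assert (p2 := pow2_ge_0 (ym - cy d1)).
  assert (Ix : - K < xm < K).
  { split.
    - destruct (Rle_or_lt xm (- K)) as [h|h]; [|exact h]. exfalso.
      assert (V * rd d1 ^ 2 < (xm - cx d1) ^ 2).
      { apply big_sq' with (V * rd d1 ^ 2 + 1); [lra|lra|unfold K in h; lra]. }
      lra.
    - destruct (Rle_or_lt K xm) as [h|h]; [|exact h]. exfalso.
      assert (V * rd d1 ^ 2 < (xm - cx d1) ^ 2).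
      { apply big_sq with (V * rd d1 ^ 2 + 1); [lra|lra|unfold K in h; lra]. }
      lra. }
  assert (Iy : - K < ym < K).
  { split.
    - destruct (Rle_or_lt ym (- K)) as [h|h]; [|exact h]. exfalso.
      assert (V * rd d1 ^ 2 < (ym - cy d1) ^ 2).
      { apply big_sq' with (V * rd d1 ^ 2 + 1); [lra|lra|unfold K in h; lra]. }
      lra.
    - destruct (Rle_or_lt K ym) as [h|h]; [|exact h]. exfalso.
      assert (V * rd d1 ^ 2 < (ym - cy d1) ^ 2).
      { apply big_sq with (V * rd d1 ^ 2 + 1); [lra|lra|unfold K in h; lra]. }
      lra. }
  assert (Hdesc := descent L K xm ym Hn Hr Ix Iy Hmin).
  assert (HT : Fm L xm ym <= 4 / 3).
  { destruct (Rle_or_lt (Fm L xm ym) (4 / 3)) as [h|h]; [exact h|].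
    exfalso. apply (angle_contra L xm ym (Fm L xm ym) Hr Hpair h Hdesc). }
  exists (xm, ym). intros d Hd. simpl.
  assert (h : g d xm ym <= 4 / 3) by (eapply Rle_trans; [apply Fm_ge; exact Hd|exact HT]).
  apply g_le_iff in h; [|apply Hr; exact Hd]. unfold num in h. lra.
Qed.


Lemma sq_pos : forall x, x <> 0 -> 0 < x ^ 2.
Proof. intros x H. replace (x ^ 2) with (Rsqr x) by (unfold Rsqr; ring). apply Rsqr_pos_lt; exact H. Qed.

Lemma dist_pos : forall a b : point, a <> b -> 0 < dist a b.
Proof.
  intros [a1 a2] [b1 b2] H. unfold dist; cbn [fst snd]. apply sqrt_lt_R0.
  pose proof (pow2_ge_0 (a1 - b1)). pose proof (pow2_ge_0 (a2 - b2)).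
  destruct (Req_dec a1 b1) as [e1|e1]; destruct (Req_dec a2 b2) as [e2|e2].
  - exfalso; apply H; subst; auto.
  - assert (0 < (a2 - b2) ^ 2) by (apply sq_pos; lra). lra.
  - assert (0 < (a1 - b1) ^ 2) by (apply sq_pos; lra). lra.
  - assert (0 < (a1 - b1) ^ 2) by (apply sq_pos; lra). lra.
Qed.

Definition todisk (e : edge) : disk := (mid (fst e) (snd e), dist (fst e) (snd e) / 2).

Theorem theorem7 (P : list point) (M Mstar : list edge) :
  NoDup P -> Nat.Even (length P) ->
  k_local_max 2 P M -> max_matching P Mstar ->
  weight M >= sqrt (3 / 7) * weight Mstar.
Proof.
  intros Hnd _ HM [HpMs _].
  assert (HM' := HM). destruct HM' as [HpM _].
  assert (Hnd' : NoDup (endpoints M)) by (eapply Permutation_NoDup; [apply Permutation_sym; exact HpM|exact Hnd]).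
  set (L := map todisk M).
  assert (Hr : forall d, In d L -> 0 < rd d).
  { intros d Hd. apply in_map_iff in Hd. destruct Hd as [[a b] [<- He]].
    unfold rd, todisk; cbn [fst snd].
    assert (0 < dist a b) by (apply dist_pos; eapply nodup_edge; eauto). lra. }
  assert (Hpair : forall d1 d2, In d1 L -> In d2 L ->
     (cx d1 - cx d2) ^ 2 + (cy d1 - cy d2) ^ 2 <= (rd d1 + rd d2) ^ 2).
  { intros d1 d2 H1 H2.
    apply in_map_iff in H1. destruct H1 as [[a b] [<- He]].
    apply in_map_iff in H2. destruct H2 as [[c d] [<- Hf]].
    unfold cx, cy, rd, todisk; cbn [fst snd].
    destruct (classic ((a, b) = (c, d))) as [Eq|Ne].
    - inversion Eq; subst. rewrite !Rminus_diag.
      replace (0 ^ 2 + 0 ^ 2) with 0 by ring. apply pow2_ge_0.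
    - destruct (local2 P M a b c d HM He Hf Ne) as [h1 h2].
      apply mid_bound; auto. }
  destruct (disk_lemma L Hr Hpair) as [O HO].
  assert (Hb : forall a b, In (a, b) M -> dist a O + dist b O <= sqrt (7 / 3) * dist a b).
  { intros a b Hab. apply center_bound.
    specialize (HO (todisk (a, b)) (in_map _ _ _ Hab)).
    unfold cx, cy, rd, todisk in HO; cbn [fst snd] in HO. exact HO. }
  assert (W1 : weight Mstar <= sqrt (7 / 3) * weight M).
  { eapply Rle_trans. apply (weight_le_sumd O).
    rewrite (sumd_perm O _ _ HpMs), <- (sumd_perm O _ _ HpM), sumd_endpoints.
    apply esum_le; exact Hb. }
  assert (S : sqrt (3 / 7) * sqrt (7 / 3) = 1).
  { rewrite <- sqrt_mult_alt by lra. replace (3 / 7 * (7 / 3)) with 1 by field. apply sqrt_1. }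
  assert (S0 : 0 <= sqrt (3 / 7)) by apply sqrt_pos.
  assert (W2 : sqrt (3 / 7) * weight Mstar <= sqrt (3 / 7) * (sqrt (7 / 3) * weight M))
    by (apply Rmult_le_compat_l; auto).
  replace (sqrt (3 / 7) * (sqrt (7 / 3) * weight M)) with (sqrt (3 / 7) * sqrt (7 / 3) * weight M) in W2 by ring.
  rewrite S in W2. lra.
Qed.
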